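(* Let $n\ge1$ be odd, $\varepsilon\ge0$, $U$ a unitary on a finite-dimensional Hilbert space, $\widetilde\Pi,\Pi$ orthogonal projectors, and $W\colon\mathrm{img}\,\Pi\to\mathrm{img}\,\widetilde\Pi$ an isometry such that for all unit vectors $|\psi\rangle\in\mathrm{img}\,\Pi$ $$\left\|\sin\left(\tfrac{\pi}{2n}\right)W|\psi\rangle-\widetilde\Pi U|\psi\rangle\right\|\le\varepsilon.$$ Then there exist $\Phi\in\mathbb{R}^n$ and a sign $s\in\{+1,-1\}$ such that $\tilde U:=s\,U_\Phi$ satisfies, for all unit vectors $|\psi\rangle\in\mathrm{img}\,\Pi$, $$\left\|W|\psi\rangle-\widetilde\Pi\tilde U|\psi\rangle\right\|\le 2n\varepsilon.$$
   Context: For odd $n$ and $\Phi=(\phi_1,\ldots,\phi_n)$: $U_\Phi:=e^{i\phi_1(2\widetilde\Pi-I)}U\prod_{j=1}^{(n-1)/2}\left(e^{i\phi_{2j}(2\Pi-I)}U^\dagger e^{i\phi_{2j+1}(2\widetilde\Pi-I)}U\right)$ (product written left to right). *)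

(* Defs.v *)
(* complex numbers as pairs of Stdlib reals; d x d complex
   matrices as functions nat -> nat -> C (only indices < d matter). *)
From Stdlib Require Import Reals Lia.
Open Scope R_scope.

Definition C : Type := (R * R)%type.
Definition RtoC (r : R) : C := (r, 0).
Definition C0 : C := (0, 0).
Definition C1 : C := (1, 0).
Definition Ci : C := (0, 1).
Definition Cadd (a b : C) : C := (fst a + fst b, snd a + snd b).
Definition Cmul (a b : C) : C :=
  (fst a * fst b - snd a * snd b, fst a * snd b + snd a * fst b).
Definition Copp (a : C) : C := (- fst a, - snd a).
Definition Cconj (a : C) : C := (fst a, - snd a).
Definition Cnorm2 (a : C) : R := fst a * fst a + snd a * snd a.

Fixpoint Csum (n : nat) (f : nat -> C) : C :=
  match n with O => C0 | S m => Cadd (Csum m f) (f m) end.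
Fixpoint Rsum (n : nat) (f : nat -> R) : R :=
  match n with O => 0 | S m => Rsum m f + f m end.

Definition Vec : Type := nat -> C.
Definition Mat : Type := nat -> nat -> C.

Definition mmul (d : nat) (A B : Mat) : Mat :=
  fun i j => Csum d (fun k => Cmul (A i k) (B k j)).
Definition mapply (d : nat) (A : Mat) (v : Vec) : Vec :=
  fun i => Csum d (fun k => Cmul (A i k) (v k)).
Definition adj (A : Mat) : Mat := fun i j => Cconj (A j i).
Definition Id : Mat := fun i j => if Nat.eqb i j then C1 else C0.
Definition madd (A B : Mat) : Mat := fun i j => Cadd (A i j) (B i j).
Definition mscale (c : C) (A : Mat) : Mat := fun i j => Cmul c (A i j).
Definition vsub (u v : Vec) : Vec := fun i => Cadd (u i) (Copp (v i)).
Definition vscale (c : C) (v : Vec) : Vec := fun i => Cmul c (v i).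

Definition vnorm (d : nat) (v : Vec) : R := sqrt (Rsum d (fun i => Cnorm2 (v i))).

Definition meq (d : nat) (A B : Mat) : Prop :=
  forall i j, (i < d)%nat -> (j < d)%nat -> A i j = B i j.

Definition unitary (d : nat) (U : Mat) : Prop :=
  meq d (mmul d (adj U) U) Id /\ meq d (mmul d U (adj U)) Id.
Definition projector (d : nat) (P : Mat) : Prop :=
  meq d (mmul d P P) P /\ meq d (adj P) P.

Definition in_img (d : nat) (P : Mat) (v : Vec) : Prop :=
  exists w : Vec, forall i, (i < d)%nat -> v i = mapply d P w i.

Definition isometry_between (d : nat) (P Pt W : Mat) : Prop :=
  forall psi, in_img d P psi ->
    in_img d Pt (mapply d W psi) /\ vnorm d (mapply d W psi) = vnorm d psi.

Definition refl (P : Mat) : Mat := madd (mscale (RtoC 2) P) (mscale (RtoC (-1)) Id).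
(* e^{i phi (2P - I)} ; since (2P-I)^2 = I for a projector P, the exponential
   equals cos(phi) I + i sin(phi) (2P - I). *)
Definition expi_refl (phi : R) (P : Mat) : Mat :=
  madd (mscale (RtoC (cos phi)) Id) (mscale (Cmul Ci (RtoC (sin phi))) (refl P)).

Definition qsp_block (d : nat) (U P Pt : Mat) (Phi : nat -> R) (j : nat) : Mat :=
  mmul d (mmul d (mmul d (expi_refl (Phi (2 * j)%nat) P) (adj U))
                 (expi_refl (Phi (2 * j + 1)%nat) Pt)) U.

Fixpoint qsp_blocks (d : nat) (U P Pt : Mat) (Phi : nat -> R) (k : nat) : Mat :=
  match k with
  | O => Id
  | S k' => mmul d (qsp_blocks d U P Pt Phi k') (qsp_block d U P Pt Phi (S k'))
  end.

(* U_Phi for odd n, Phi = (Phi 1, ..., Phi n) *)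
Definition UPhi (d : nat) (U P Pt : Mat) (Phi : nat -> R) (n : nat) : Mat :=
  mmul d (mmul d (expi_refl (Phi 1%nat) Pt) U) (qsp_blocks d U P Pt Phi ((n - 1) / 2)).

(* Main.v *)
Require Import Defs.
From Stdlib Require Import Reals Lia Lra FunctionalExtensionality.
Open Scope R_scope.

Local Notation CC := Defs.C.
Lemma Ceq (p q : CC) : fst p = fst q -> snd p = snd q -> p = q.
Proof. destruct p, q; simpl; intros; subst; reflexivity. Qed.

Ltac csimpl := unfold Cadd, Cmul, Copp, Cconj, RtoC, C0, C1, Ci in *; simpl in *.
Ltac cring := apply Ceq; csimpl; ring.

Lemma Csum_ext n f g : (forall i, (i < n)%nat -> f i = g i) -> Csum n f = Csum n g.
Proof. induction n; simpl; intros; auto. rewrite IHn by (intros; apply H; lia).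
  rewrite H by lia. auto. Qed.

Lemma Csum_add n f g : Csum n (fun i => Cadd (f i) (g i)) = Cadd (Csum n f) (Csum n g).
Proof. induction n; simpl. cring. rewrite IHn. cring. Qed.

Lemma Csum_mul_l n c f : Cmul c (Csum n f) = Csum n (fun i => Cmul c (f i)).
Proof. induction n; simpl. cring. rewrite <- IHn. cring. Qed.

Lemma Csum_conj n f : Cconj (Csum n f) = Csum n (fun i => Cconj (f i)).
Proof. induction n; simpl. cring. rewrite <- IHn. cring. Qed.

Lemma Csum_swap n m (f : nat -> nat -> CC) :
  Csum n (fun i => Csum m (fun j => f i j)) = Csum m (fun j => Csum n (fun i => f i j)).
Proof. induction n; simpl.
  - induction m; simpl; auto. rewrite <- IHm. cring.
  - rewrite IHn. rewrite <- Csum_add. reflexivity. Qed.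

Lemma Rsum_ext n f g : (forall i, (i < n)%nat -> f i = g i) -> Rsum n f = Rsum n g.
Proof. induction n; simpl; intros; auto. rewrite IHn by (intros; apply H; lia).
  rewrite H by lia. auto. Qed.

Lemma fst_Csum n f : fst (Csum n f) = Rsum n (fun i => fst (f i)).
Proof. induction n; simpl; auto. rewrite <- IHn. reflexivity. Qed.

Lemma Rsum_add n f g : Rsum n (fun i => f i + g i) = Rsum n f + Rsum n g.
Proof. induction n; simpl. ring. rewrite IHn. ring. Qed.

Lemma Rsum_scale n c f : Rsum n (fun i => c * f i) = c * Rsum n f.
Proof. induction n; simpl. ring. rewrite IHn. ring. Qed.

Lemma Rsum_nonneg n f : (forall i, (i < n)%nat -> 0 <= f i) -> 0 <= Rsum n f.
Proof. induction n; simpl; intros. lra. assert (0 <= Rsum n f) by (apply IHn; intros; apply H; lia).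
  assert (0 <= f n) by (apply H; lia). lra. Qed.

Lemma Rsum_zero_each n f : (forall i, (i < n)%nat -> 0 <= f i) -> Rsum n f = 0 ->
  forall i, (i < n)%nat -> f i = 0.
Proof. induction n; simpl; intros. lia.
  assert (0 <= Rsum n f) by (apply Rsum_nonneg; intros; apply H; lia).
  assert (0 <= f n) by (apply H; lia).
  destruct (Nat.eq_dec i n). subst; lra. apply IHn; auto; try lra. lia. Qed.

Definition vadd (u v : Vec) : Vec := fun i => Cadd (u i) (v i).

Lemma mapply_vadd d M u v : mapply d M (vadd u v) = vadd (mapply d M u) (mapply d M v).
Proof. apply functional_extensionality; intro i. unfold mapply, vadd.
  rewrite <- Csum_add. apply Csum_ext. intros. cring. Qed.

Lemma mapply_vscale d M c v : mapply d M (vscale c v) = vscale c (mapply d M v).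
Proof. apply functional_extensionality; intro i. unfold mapply, vscale.
  rewrite Csum_mul_l. apply Csum_ext. intros. cring. Qed.

Lemma mapply_vsub d M u v : mapply d M (vsub u v) = vsub (mapply d M u) (mapply d M v).
Proof. apply functional_extensionality; intro i. unfold mapply, vsub.
  assert (Copp (Csum d (fun k => Cmul (M i k) (v k))) = Cmul (RtoC (-1)) (Csum d (fun k => Cmul (M i k) (v k)))) by cring.
  rewrite H, Csum_mul_l, <- Csum_add. apply Csum_ext. intros. cring. Qed.

Lemma Csum_mul_r n c f : Cmul (Csum n f) c = Csum n (fun i => Cmul (f i) c).
Proof. induction n; simpl. cring. rewrite <- IHn. cring. Qed.

Lemma mapply_mmul d A B v : mapply d (mmul d A B) v = mapply d A (mapply d B v).
Proof. apply functional_extensionality; intro i. unfold mapply, mmul.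
  transitivity (Csum d (fun k => Csum d (fun l => Cmul (A i l) (Cmul (B l k) (v k))))).
  - apply Csum_ext; intros. rewrite Csum_mul_r. apply Csum_ext; intros. cring.
  - rewrite Csum_swap. apply Csum_ext; intros. rewrite Csum_mul_l. reflexivity.
Qed.

Lemma mapply_ext d M u v : (forall k, (k < d)%nat -> u k = v k) -> mapply d M u = mapply d M v.
Proof. intros H. apply functional_extensionality; intro i. unfold mapply.
  apply Csum_ext. intros. rewrite H; auto. Qed.

Lemma mapply_meq d A B v i : meq d A B -> (i < d)%nat -> mapply d A v i = mapply d B v i.
Proof. intros H Hi. unfold mapply. apply Csum_ext. intros. rewrite H; auto. Qed.

Lemma Csum_Id m i (v : Vec) : Csum m (fun k => Cmul (Id i k) (v k)) = if Nat.ltb i m then v i else C0.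
Proof. induction m; simpl. auto. rewrite IHm. unfold Id.
  destruct (Nat.ltb i m) eqn:E1; destruct (Nat.ltb i (S m)) eqn:E2;
  destruct (Nat.eqb i m) eqn:E3;
  apply Nat.ltb_lt in E1 || apply Nat.ltb_ge in E1;
  apply Nat.ltb_lt in E2 || apply Nat.ltb_ge in E2;
  apply Nat.eqb_eq in E3 || apply Nat.eqb_neq in E3; try lia; try subst; cring. Qed.

Lemma mapply_Id d v i : (i < d)%nat -> mapply d Id v i = v i.
Proof. intros. unfold mapply. rewrite Csum_Id. apply Nat.ltb_lt in H. rewrite H. auto. Qed.

Lemma mapply_madd d A B v : mapply d (madd A B) v = vadd (mapply d A v) (mapply d B v).
Proof. apply functional_extensionality; intro i. unfold mapply, vadd, madd.
  rewrite <- Csum_add. apply Csum_ext. intros. cring. Qed.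

Lemma mapply_mscale d c A v : mapply d (mscale c A) v = vscale c (mapply d A v).
Proof. apply functional_extensionality; intro i. unfold mapply, vscale, mscale.
  rewrite Csum_mul_l. apply Csum_ext. intros. cring. Qed.

Definition rdot d (u v : Vec) := Rsum d (fun i => fst (u i) * fst (v i) + snd (u i) * snd (v i)).
Definition nsq d (v : Vec) := Rsum d (fun i => Cnorm2 (v i)).

Lemma vnorm_nsq d v : vnorm d v = sqrt (nsq d v).
Proof. reflexivity. Qed.
Lemma nsq_rdot d v : nsq d v = rdot d v v.
Proof. reflexivity. Qed.
Lemma nsq_nonneg d v : 0 <= nsq d v.
Proof. apply Rsum_nonneg. intros. unfold Cnorm2. nra. Qed.
Lemma vnorm_nonneg d v : 0 <= vnorm d v.
Proof. apply sqrt_pos. Qed.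
Lemma vnorm_sq d v : vnorm d v * vnorm d v = nsq d v.
Proof. apply sqrt_sqrt, nsq_nonneg. Qed.

Lemma rdot_ext d u u' v v' : (forall i, (i < d)%nat -> u i = u' i) ->
  (forall i, (i < d)%nat -> v i = v' i) -> rdot d u v = rdot d u' v'.
Proof. intros. unfold rdot. apply Rsum_ext. intros. rewrite H, H0; auto. Qed.
Lemma nsq_ext d u u' : (forall i, (i < d)%nat -> u i = u' i) -> nsq d u = nsq d u'.
Proof. intros. rewrite !nsq_rdot. apply rdot_ext; auto. Qed.
Lemma vnorm_ext d u u' : (forall i, (i < d)%nat -> u i = u' i) -> vnorm d u = vnorm d u'.
Proof. intros. rewrite !vnorm_nsq. f_equal. apply nsq_ext; auto. Qed.

Lemma rdot_sym d u v : rdot d u v = rdot d v u.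
Proof. unfold rdot. apply Rsum_ext. intros. ring. Qed.
Lemma rdot_vadd_l d u v w : rdot d (vadd u v) w = rdot d u w + rdot d v w.
Proof. unfold rdot. rewrite <- Rsum_add. apply Rsum_ext. intros. unfold vadd, Cadd; simpl. ring. Qed.
Lemma rdot_vadd_r d u v w : rdot d w (vadd u v) = rdot d w u + rdot d w v.
Proof. rewrite !(rdot_sym d w). apply rdot_vadd_l. Qed.
Lemma rdot_vscale_l d r u w : rdot d (vscale (RtoC r) u) w = r * rdot d u w.
Proof. unfold rdot. rewrite <- Rsum_scale. apply Rsum_ext. intros. unfold vscale, Cmul, RtoC; simpl. ring. Qed.
Lemma rdot_vscale_r d r u w : rdot d w (vscale (RtoC r) u) = r * rdot d w u.
Proof. rewrite !(rdot_sym d w). apply rdot_vscale_l. Qed.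

Definition cinner d (u v : Vec) := Csum d (fun i => Cmul (Cconj (u i)) (v i)).
Lemma rdot_cinner d u v : rdot d u v = fst (cinner d u v).
Proof. unfold cinner. rewrite fst_Csum. unfold rdot. apply Rsum_ext. intros. csimpl. ring. Qed.

Lemma rdot_adj d M u v : rdot d (mapply d M u) v = rdot d u (mapply d (adj M) v).
Proof. rewrite !rdot_cinner. f_equal. unfold cinner, mapply, adj.
  transitivity (Csum d (fun i => Csum d (fun k => Cmul (Cconj (Cmul (M i k) (u k))) (v i)))).
  - apply Csum_ext; intros. rewrite Csum_conj, Csum_mul_r. reflexivity.
  - rewrite Csum_swap. apply Csum_ext; intros. rewrite Csum_mul_l. apply Csum_ext; intros. cring.
Qed.

Lemma nsq_zero_each d v : nsq d v = 0 -> forall i, (i < d)%nat -> fst (v i) = 0 /\ snd (v i) = 0.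
Proof. intros H i Hi. assert (Cnorm2 (v i) = 0).
  { apply (Rsum_zero_each d (fun i => Cnorm2 (v i))); auto. intros. unfold Cnorm2; nra. }
  unfold Cnorm2 in H0. split; nra. Qed.

Lemma rdot_zero_l d u v : nsq d u = 0 -> rdot d u v = 0.
Proof. intros H. unfold rdot. transitivity (Rsum d (fun _ => 0)).
  apply Rsum_ext. intros. destruct (nsq_zero_each d u H i H0) as [-> ->]. ring.
  clear. induction d; simpl; auto. rewrite IHd. ring. Qed.

Lemma nsq_comb d t u v : nsq d (vadd (vscale (RtoC t) u) v) = t*t * nsq d u + 2 * t * rdot d u v + nsq d v.
Proof. rewrite !nsq_rdot, rdot_vadd_l, !rdot_vadd_r, !rdot_vscale_l, !rdot_vscale_r, (rdot_sym d v u). ring. Qed.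

Lemma vsub_eq u v : vsub u v = vadd u (vscale (RtoC (-1)) v).
Proof. apply functional_extensionality; intro i. unfold vsub, vadd, vscale. cring. Qed.

Lemma vscale1 v : vscale (RtoC 1) v = v.
Proof. apply functional_extensionality; intro i. unfold vscale. cring. Qed.

Lemma nsq_vadd d u v : nsq d (vadd u v) = nsq d u + 2 * rdot d u v + nsq d v.
Proof. rewrite <- (vscale1 u) at 1. rewrite nsq_comb. ring. Qed.

Lemma CS d u v : rdot d u v <= vnorm d u * vnorm d v.
Proof.
  pose proof (vnorm_nonneg d u). pose proof (vnorm_nonneg d v).
  pose proof (vnorm_sq d u). pose proof (vnorm_sq d v).
  destruct (Req_dec (nsq d u) 0) as [Hu|Hu].
  { rewrite rdot_zero_l; auto. nra. }
  destruct (Req_dec (nsq d v) 0) as [Hv|Hv].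
  { rewrite rdot_sym, rdot_zero_l; auto. nra. }
  assert (0 < vnorm d u). { destruct H; auto. exfalso; apply Hu; nra. }
  assert (0 < vnorm d v). { destruct H0; auto. exfalso; apply Hv; nra. }
  set (t := vnorm d v / vnorm d u).
  pose proof (nsq_nonneg d (vadd (vscale (RtoC t) u) (vscale (RtoC (-1)) v))).
  rewrite nsq_comb, rdot_vscale_r in H5.
  assert (Hnv : nsq d (vscale (RtoC (-1)) v) = nsq d v).
  { rewrite !nsq_rdot, rdot_vscale_l, rdot_vscale_r. ring. }
  rewrite Hnv in H5.
  assert (t * t * nsq d u = nsq d v). { unfold t. rewrite <- H1, <- H2. field. lra. }
  assert (0 < t). { unfold t. apply Rdiv_lt_0_compat; auto. }
  assert (t * rdot d u v <= t * (vnorm d u * vnorm d v)).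
  { assert (t * (vnorm d u * vnorm d v) = nsq d v). { rewrite <- H2. unfold t. field. lra. } nra. }
  apply Rmult_le_reg_l with t; auto.
Qed.

Lemma vnorm_triangle d u v : vnorm d (vadd u v) <= vnorm d u + vnorm d v.
Proof. rewrite (vnorm_nsq d (vadd u v)), nsq_vadd.
  pose proof (CS d u v). pose proof (vnorm_nonneg d u). pose proof (vnorm_nonneg d v).
  rewrite <- (sqrt_square (vnorm d u + vnorm d v)) by lra.
  apply sqrt_le_1_alt. rewrite <- (vnorm_sq d u), <- (vnorm_sq d v). nra. Qed.

Lemma vnorm_vscale d r v : vnorm d (vscale (RtoC r) v) = Rabs r * vnorm d v.
Proof. rewrite !vnorm_nsq. assert (nsq d (vscale (RtoC r) v) = (r*r) * nsq d v).
  { rewrite !nsq_rdot, rdot_vscale_l, rdot_vscale_r. ring. }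
  rewrite H, sqrt_mult. rewrite <- (sqrt_Rsqr_abs r). reflexivity.
  apply Rle_0_sqr. apply nsq_nonneg. Qed.

Lemma vnorm_neg d v : vnorm d (vscale (RtoC (-1)) v) = vnorm d v.
Proof. rewrite vnorm_vscale. replace (Rabs (-1)) with 1. ring. rewrite Rabs_left; lra. Qed.

Lemma vnorm_sub_triangle d u v : vnorm d (vsub u v) <= vnorm d u + vnorm d v.
Proof. rewrite vsub_eq. rewrite <- (vnorm_neg d v). apply vnorm_triangle. Qed.

Lemma vnorm_sub_sym d u v : vnorm d (vsub u v) = vnorm d (vsub v u).
Proof. replace (vsub v u) with (vscale (RtoC (-1)) (vsub u v)). apply eq_sym, vnorm_neg.
  apply functional_extensionality; intro i. unfold vsub, vscale. cring. Qed.

Lemma adj_adj (A : Mat) : adj (adj A) = A.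
Proof. apply functional_extensionality; intro i; apply functional_extensionality; intro j.
  unfold adj. cring. Qed.

Lemma unitary_adj d U : unitary d U -> unitary d (adj U).
Proof. intros [H1 H2]. split; rewrite adj_adj; auto. Qed.

Lemma unitary_nsq d U v : unitary d U -> nsq d (mapply d U v) = nsq d v.
Proof. intros [H1 H2]. rewrite !nsq_rdot, rdot_adj, <- mapply_mmul.
  apply rdot_ext; auto. intros. rewrite (mapply_meq d _ _ v i H1 H). apply mapply_Id; auto. Qed.

Lemma vnorm_unitary d U v : unitary d U -> vnorm d (mapply d U v) = vnorm d v.
Proof. intros. rewrite !vnorm_nsq, unitary_nsq; auto. Qed.

Lemma UUadj d U v i : unitary d U -> (i < d)%nat -> mapply d U (mapply d (adj U) v) i = v i.
Proof. intros [H1 H2] Hi. rewrite <- mapply_mmul, (mapply_meq d _ _ v i H2 Hi). apply mapply_Id; auto. Qed.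
Lemma UadjU d U v i : unitary d U -> (i < d)%nat -> mapply d (adj U) (mapply d U v) i = v i.
Proof. intros [H1 H2] Hi. rewrite <- mapply_mmul, (mapply_meq d _ _ v i H1 Hi). apply mapply_Id; auto. Qed.

Lemma proj_idem d P v i : projector d P -> (i < d)%nat -> mapply d P (mapply d P v) i = mapply d P v i.
Proof. intros [H1 H2] Hi. rewrite <- mapply_mmul. apply mapply_meq; auto. Qed.

Lemma proj_sa d P u v : projector d P -> rdot d (mapply d P u) v = rdot d u (mapply d P v).
Proof. intros [H1 H2]. rewrite rdot_adj. apply rdot_ext; auto. intros. apply mapply_meq; auto. Qed.

Lemma nsq_proj d P v : projector d P -> nsq d (mapply d P v) = rdot d v (mapply d P v).
Proof. intros HP. rewrite nsq_rdot, proj_sa; auto. apply rdot_ext; auto. intros. apply proj_idem; auto. Qed.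

Lemma vnorm_proj_le d P v : projector d P -> vnorm d (mapply d P v) <= vnorm d v.
Proof. intros HP. rewrite !vnorm_nsq. apply sqrt_le_1_alt.
  pose proof (nsq_nonneg d (vadd (vscale (RtoC (-1)) (mapply d P v)) v)).
  rewrite nsq_comb in H. rewrite rdot_sym, <- nsq_proj in H; auto. lra. Qed.

Definition refl_v d (X : Mat) (v : Vec) : Vec := vsub v (vscale (RtoC 2) (mapply d X v)).

Lemma nsq_refl d P v : projector d P -> nsq d (refl_v d P v) = nsq d v.
Proof. intros HP. unfold refl_v. rewrite vsub_eq.
  replace (vadd v (vscale (RtoC (-1)) (vscale (RtoC 2) (mapply d P v)))) with
    (vadd (vscale (RtoC (-2)) (mapply d P v)) v).
  rewrite nsq_comb, rdot_sym, <- nsq_proj; auto. ring.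
  apply functional_extensionality; intro i. unfold vadd, vscale. cring. Qed.

Lemma vnorm_refl d P v : projector d P -> vnorm d (refl_v d P v) = vnorm d v.
Proof. intros. rewrite !vnorm_nsq, nsq_refl; auto. Qed.

Lemma in_img_fix d P v i : projector d P -> in_img d P v -> (i < d)%nat -> mapply d P v i = v i.
Proof. intros HP [w Hw] Hi. rewrite Hw by auto. rewrite (mapply_ext d P v (mapply d P w)) by auto.
  apply proj_idem; auto. Qed.

Lemma refl_v_lin d X u v : refl_v d X (vadd u v) = vadd (refl_v d X u) (refl_v d X v).
Proof. unfold refl_v. rewrite mapply_vadd. apply functional_extensionality; intro i.
  unfold vsub, vadd, vscale. cring. Qed.
Lemma refl_v_scale d X c v : refl_v d X (vscale c v) = vscale c (refl_v d X v).
Proof. unfold refl_v. rewrite mapply_vscale. apply functional_extensionality; intro i.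
  unfold vsub, vadd, vscale. cring. Qed.
Lemma refl_v_ext d X u v : (forall k, (k < d)%nat -> u k = v k) -> forall i, (i < d)%nat -> refl_v d X u i = refl_v d X v i.
Proof. intros. unfold refl_v, vsub, vscale. rewrite H by auto. rewrite (mapply_ext d X u v); auto. Qed.

Lemma vsub_lin_l d u v w : rdot d (vsub u v) w = rdot d u w - rdot d v w.
Proof. rewrite vsub_eq, rdot_vadd_l, rdot_vscale_l. ring. Qed.
Lemma vsub_lin_r d u v w : rdot d w (vsub u v) = rdot d w u - rdot d w v.
Proof. rewrite vsub_eq, rdot_vadd_r, rdot_vscale_r. ring. Qed.

Definition Hop d U P (x : Vec) : Vec := mapply d U (refl_v d P (mapply d (adj U) x)).
Definition Gop d U P Pt (x : Vec) : Vec := Hop d U P (refl_v d Pt x).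

Lemma Hop_add d U P u v : Hop d U P (vadd u v) = vadd (Hop d U P u) (Hop d U P v).
Proof. unfold Hop. rewrite mapply_vadd, refl_v_lin, mapply_vadd. auto. Qed.
Lemma Hop_scale d U P c v : Hop d U P (vscale c v) = vscale c (Hop d U P v).
Proof. unfold Hop. rewrite mapply_vscale, refl_v_scale, mapply_vscale. auto. Qed.
Lemma Hop_sub d U P u v : Hop d U P (vsub u v) = vsub (Hop d U P u) (Hop d U P v).
Proof. rewrite !vsub_eq, Hop_add, Hop_scale. auto. Qed.
Lemma Hop_ext d U P u v : (forall k, (k < d)%nat -> u k = v k) -> Hop d U P u = Hop d U P v.
Proof. intros. unfold Hop. rewrite (mapply_ext d (adj U) u v); auto. Qed.
Lemma Gop_add d U P Pt u v : Gop d U P Pt (vadd u v) = vadd (Gop d U P Pt u) (Gop d U P Pt v).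
Proof. unfold Gop. rewrite refl_v_lin, Hop_add. auto. Qed.
Lemma Gop_scale d U P Pt c v : Gop d U P Pt (vscale c v) = vscale c (Gop d U P Pt v).
Proof. unfold Gop. rewrite refl_v_scale, Hop_scale. auto. Qed.
Lemma Gop_sub d U P Pt u v : Gop d U P Pt (vsub u v) = vsub (Gop d U P Pt u) (Gop d U P Pt v).
Proof. rewrite !vsub_eq, Gop_add, Gop_scale. auto. Qed.
Lemma Gop_ext d U P Pt u v : (forall k, (k < d)%nat -> u k = v k) -> Gop d U P Pt u = Gop d U P Pt v.
Proof. intros. unfold Gop. apply Hop_ext. intros. apply refl_v_ext; auto. Qed.
Lemma vnorm_Hop d U P v : unitary d U -> projector d P -> vnorm d (Hop d U P v) = vnorm d v.
Proof. intros. unfold Hop. rewrite vnorm_unitary, vnorm_refl, vnorm_unitary; auto. apply unitary_adj; auto. Qed.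
Lemma vnorm_Gop d U P Pt v : unitary d U -> projector d P -> projector d Pt -> vnorm d (Gop d U P Pt v) = vnorm d v.
Proof. intros. unfold Gop. rewrite vnorm_Hop, vnorm_refl; auto. Qed.

Lemma in_img_vscale d P c v : in_img d P v -> in_img d P (vscale c v).
Proof. intros [w Hw]. exists (vscale c w). intros. rewrite mapply_vscale. unfold vscale. rewrite Hw; auto. Qed.
Lemma in_img_vadd d P u v : in_img d P u -> in_img d P v -> in_img d P (vadd u v).
Proof. intros [w Hw] [w' Hw']. exists (vadd w w'). intros. rewrite mapply_vadd. unfold vadd. rewrite Hw, Hw'; auto. Qed.

Lemma vnorm_zero d : vnorm d (vscale (RtoC 0) (fun _ => C0)) = 0.
Proof. rewrite vnorm_vscale, Rabs_R0. ring. Qed.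

Lemma scaled_hyp d eps s U Pt P W (HU : unitary d U) (HPt : projector d Pt)
  (HW : isometry_between d P Pt W)
  (Hap : forall psi, in_img d P psi -> vnorm d psi = 1 ->
     vnorm d (vsub (vscale (RtoC s) (mapply d W psi)) (mapply d Pt (mapply d U psi))) <= eps)
  v (Hv : in_img d P v) :
  vnorm d (vsub (vscale (RtoC s) (mapply d W v)) (mapply d Pt (mapply d U v))) <= eps * vnorm d v.
Proof.
  pose proof (vnorm_nonneg d v) as Hn.
  destruct (Req_dec (vnorm d v) 0) as [H0|H0].
  - rewrite H0. eapply Rle_trans. apply vnorm_sub_triangle.
    rewrite vnorm_vscale. destruct (HW v Hv) as [_ HWv]. rewrite HWv, H0.
    eapply Rle_trans. apply Rplus_le_compat_l. apply vnorm_proj_le; auto.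
    rewrite vnorm_unitary, H0; auto. lra.
  - set (r := / vnorm d v).
    assert (Hr : 0 < r) by (apply Rinv_0_lt_compat; lra).
    specialize (Hap (vscale (RtoC r) v)).
    rewrite !mapply_vscale in Hap.
    replace (vsub (vscale (RtoC s) (vscale (RtoC r) (mapply d W v)))
                  (vscale (RtoC r) (mapply d Pt (mapply d U v)))) with
      (vscale (RtoC r) (vsub (vscale (RtoC s) (mapply d W v)) (mapply d Pt (mapply d U v)))) in Hap.
    2:{ apply functional_extensionality; intro i. unfold vsub, vscale. cring. }
    rewrite !vnorm_vscale, !(Rabs_pos_eq r) in Hap by lra.
    assert (Hle : r * vnorm d (vsub (vscale (RtoC s) (mapply d W v)) (mapply d Pt (mapply d U v))) <= eps).
    { apply Hap. apply in_img_vscale; auto. unfold r. field. auto. }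
    unfold r in Hle. apply Rmult_le_reg_l with (/ vnorm d v). apply Rinv_0_lt_compat; lra.
    replace (/ vnorm d v * (eps * vnorm d v)) with eps by (field; auto). auto.
Qed.

Lemma polar d P Pt W (HW : isometry_between d P Pt W) u v :
  in_img d P u -> in_img d P v -> rdot d (mapply d W u) (mapply d W v) = rdot d u v.
Proof. intros Hu Hv.
  assert (forall x, in_img d P x -> nsq d (mapply d W x) = nsq d x).
  { intros x Hx. destruct (HW x Hx) as [_ H]. rewrite <- !vnorm_sq, H. auto. }
  pose proof (H _ (in_img_vadd d P u v Hu Hv)). rewrite mapply_vadd, !nsq_vadd, H, H in H0; auto. lra.
Qed.

Lemma dual d eps s U Pt P W (HU : unitary d U) (HPt : projector d Pt) (HP : projector d P)
  (HW : isometry_between d P Pt W) (Heps : 0 <= eps)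
  (Hap : forall psi, in_img d P psi -> vnorm d psi = 1 ->
     vnorm d (vsub (vscale (RtoC s) (mapply d W psi)) (mapply d Pt (mapply d U psi))) <= eps)
  psi (Hpsi : in_img d P psi) :
  vnorm d (mapply d P (vsub (mapply d (adj U) (mapply d W psi)) (vscale (RtoC s) psi))) <= eps * vnorm d psi.
Proof.
  set (a := mapply d W psi).
  set (w := vsub (mapply d (adj U) a) (vscale (RtoC s) psi)).
  set (z := mapply d P w).
  assert (Hz : in_img d P z) by (exists w; auto).
  destruct (HW psi Hpsi) as [Ha Hna]. fold a in Ha, Hna.
  set (e := vsub (vscale (RtoC s) (mapply d W z)) (mapply d Pt (mapply d U z))).
  assert (He : vnorm d e <= eps * vnorm d z) by (apply (scaled_hyp d eps s U Pt P W); auto).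
  assert (Hnsq : nsq d z = rdot d (vscale (RtoC (-1)) e) a).
  { rewrite nsq_rdot. unfold z at 2. rewrite <- proj_sa by auto.
    rewrite (rdot_ext d (mapply d P z) z w w) by (intros; auto; apply in_img_fix; auto).
    unfold w. rewrite vsub_lin_r, rdot_vscale_r.
    rewrite rdot_sym, rdot_adj, adj_adj, rdot_sym.
    rewrite (rdot_ext d (mapply d U z) (mapply d U z) a (mapply d Pt a)) by (intros; auto; symmetry; apply in_img_fix; auto).
    rewrite <- proj_sa by auto.
    replace (mapply d Pt (mapply d U z)) with (vsub (vscale (RtoC s) (mapply d W z)) e).
    2:{ apply functional_extensionality; intro i. unfold e, vsub, vscale. cring. }
    rewrite vsub_lin_l, rdot_vscale_l. unfold a. rewrite (polar d P Pt W HW z psi Hz Hpsi).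
    rewrite rdot_vscale_l. ring. }
  pose proof (CS d (vscale (RtoC (-1)) e) a). rewrite vnorm_neg, Hna, <- Hnsq, <- vnorm_sq in H.
  pose proof (vnorm_nonneg d z). pose proof (vnorm_nonneg d psi). pose proof (vnorm_nonneg d e).
  destruct (Req_dec (vnorm d z) 0). rewrite H3. nra.
  assert (vnorm d z * vnorm d z <= vnorm d z * (eps * vnorm d psi)) by nra.
  apply Rmult_le_reg_l with (vnorm d z). lra. lra.
Qed.

Ltac cfield := apply Ceq; csimpl; field; auto.

Lemma GA d s U Pt P W psi (HU : unitary d U) (HPt : projector d Pt) (HP : projector d P)
  (HW : isometry_between d P Pt W) (Hpsi : in_img d P psi) :
  let a := mapply d W psi in
  let z := mapply d P (vsub (mapply d (adj U) a) (vscale (RtoC s) psi)) in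
  forall i, (i < d)%nat ->
  Gop d U P Pt a i = Cadd (Cmul (RtoC (-1)) (a i))
     (Cadd (Cmul (RtoC 2) (mapply d U z i)) (Cmul (RtoC (2*s)) (mapply d U psi i))).
Proof.
  intros a z i Hi. destruct (HW psi Hpsi) as [Ha _]. fold a in Ha.
  assert (Hzk : forall k, (k < d)%nat -> mapply d P (mapply d (adj U) a) k = Cadd (z k) (Cmul (RtoC s) (psi k))).
  { intros k Hk. unfold z. rewrite mapply_vsub, mapply_vscale. unfold vsub, vscale.
    rewrite (in_img_fix d P psi k); auto. cring. }
  unfold Gop, Hop.
  rewrite (mapply_ext d (adj U) (refl_v d Pt a) (vscale (RtoC (-1)) a)).
  2:{ intros k Hk. unfold refl_v, vsub, vscale. rewrite in_img_fix; auto. cring. }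
  rewrite mapply_vscale, refl_v_scale, mapply_vscale.
  rewrite (mapply_ext d U (refl_v d P (mapply d (adj U) a))
     (vsub (mapply d (adj U) a) (vscale (RtoC 2) (vadd z (vscale (RtoC s) psi))))).
  2:{ intros k Hk. unfold refl_v, vsub, vscale, vadd. rewrite Hzk; auto. }
  rewrite mapply_vsub, mapply_vscale, mapply_vadd, mapply_vscale.
  unfold vscale, vsub, vadd. rewrite UUadj; auto. cring.
Qed.

Lemma GB d s c U Pt P W psi (HU : unitary d U) (HPt : projector d Pt) (HP : projector d P)
  (HW : isometry_between d P Pt W) (Hpsi : in_img d P psi) (Hc : c <> 0) :
  let a := mapply d W psi in
  let z := mapply d P (vsub (mapply d (adj U) a) (vscale (RtoC s) psi)) in
  let u0 := mapply d U psi in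
  let b := vscale (RtoC (/c)) (vsub u0 (vscale (RtoC s) a)) in
  forall i, (i < d)%nat ->
  Gop d U P Pt b i = Cadd (Cmul (RtoC ((2*s*s - 1)/c)) (u0 i)) (Cadd (Cmul (RtoC (-s/c)) (a i))
      (Cadd (Cmul (RtoC (2*s/c)) (mapply d U z i)) (Cmul (RtoC (-2)) (Hop d U P (mapply d Pt b) i)))).
Proof.
  intros a z u0 b i Hi. destruct (HW psi Hpsi) as [Ha _]. fold a in Ha.
  assert (Hzk : forall k, (k < d)%nat -> mapply d P (mapply d (adj U) a) k = Cadd (z k) (Cmul (RtoC s) (psi k))).
  { intros k Hk. unfold z. rewrite mapply_vsub, mapply_vscale. unfold vsub, vscale.
    rewrite (in_img_fix d P psi k); auto. cring. }
  assert (Hu0 : forall k, (k < d)%nat -> mapply d (adj U) u0 k = psi k).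
  { intros. unfold u0. apply UadjU; auto. }
  assert (HPu0 : forall k, (k < d)%nat -> mapply d P (mapply d (adj U) u0) k = psi k).
  { intros. rewrite (mapply_ext d P _ psi Hu0). apply in_img_fix; auto. }
  unfold Gop. change (refl_v d Pt b) with (vsub b (vscale (RtoC 2) (mapply d Pt b))).
  rewrite Hop_sub, Hop_scale.
  unfold vsub at 1, vscale at 1.
  unfold Hop at 1.
  rewrite (mapply_ext d U (refl_v d P (mapply d (adj U) b))
     (vsub (vscale (RtoC (/c)) (vsub psi (vscale (RtoC s) (mapply d (adj U) a))))
           (vscale (RtoC 2) (vscale (RtoC (/c)) (vsub psi (vscale (RtoC s) (vadd z (vscale (RtoC s) psi)))))))).
  2:{ intros k Hk. unfold b, refl_v. rewrite !mapply_vscale, !mapply_vsub, !mapply_vscale.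
      unfold vsub, vscale, vadd. rewrite Hu0, HPu0, Hzk; auto. }
  rewrite !mapply_vsub, !mapply_vscale, !mapply_vsub, !mapply_vscale, mapply_vadd, mapply_vscale.
  unfold vscale, vsub, vadd. rewrite UUadj; auto. fold u0. cfield.
Qed.

Lemma trig_a al th : cos th <> 0 ->
  sin (al + 2*th) = - ((- sin al - sin th * cos al / cos th) +
     sin th * (2 * sin th * sin al + cos al * (2 * sin th * sin th - 1) / cos th)).
Proof. intros Hc. rewrite sin_plus, sin_2a, cos_2a_sin.
  pose proof (sin2_cos2 th). unfold Rsqr in H.
  transitivity (sin al * (1 - 2 * sin th * sin th) + 2 * sin th * cos al * ((1 - sin th * sin th) / cos th)).
  replace ((1 - sin th * sin th) / cos th) with (cos th). ring.
  replace (1 - sin th * sin th) with (cos th * cos th) by lra. field; auto.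
  field; auto. Qed.

Lemma trig_b al th : cos th <> 0 ->
  cos (al + 2*th) = - (cos th * (2 * sin th * sin al + cos al * (2 * sin th * sin th - 1) / cos th)).
Proof. intros Hc. rewrite cos_plus, sin_2a, cos_2a_sin. field; auto. Qed.

Lemma step d eps th U Pt P W psi (HU : unitary d U) (HPt : projector d Pt) (HP : projector d P)
  (HW : isometry_between d P Pt W) (Heps : 0 <= eps)
  (Hap : forall psi, in_img d P psi -> vnorm d psi = 1 ->
     vnorm d (vsub (vscale (RtoC (sin th)) (mapply d W psi)) (mapply d Pt (mapply d U psi))) <= eps)
  (Hpsi : in_img d P psi) (Hunit : vnorm d psi = 1) (Hc : 0 < cos th) :
  let s := sin th in let c := cos th in
  let a := mapply d W psi in
  let u0 := mapply d U psi in
  let b := vscale (RtoC (/c)) (vsub u0 (vscale (RtoC s) a)) in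
  forall al, exists E,
    (forall i, (i < d)%nat ->
      Gop d U P Pt (vadd (vscale (RtoC (sin al)) a) (vscale (RtoC (cos al)) b)) i =
      vadd (vscale (RtoC (-1)) (vadd (vscale (RtoC (sin (al + 2*th))) a) (vscale (RtoC (cos (al + 2*th))) b))) E i)
    /\ vnorm d E <= 4 * eps / c.
Proof.
  intros s c a u0 b al.
  assert (Hc0 : c <> 0) by (unfold c; lra).
  set (z := mapply d P (vsub (mapply d (adj U) a) (vscale (RtoC s) psi))).
  set (f := mapply d Pt b).
  exists (vadd (vscale (RtoC (2 * sin al + 2 * s * cos al / c)) (mapply d U z))
               (vscale (RtoC (-2 * cos al)) (Hop d U P f))).
  split.
  - intros i Hi. rewrite Gop_add, !Gop_scale.
    unfold vadd at 1, vscale at 1 2.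
    pose proof (GA d s U Pt P W psi HU HPt HP HW Hpsi i Hi) as HA.
    pose proof (GB d s c U Pt P W psi HU HPt HP HW Hpsi Hc0 i Hi) as HB.
    cbv zeta in HA, HB. fold a in HA, HB. fold z in HA, HB. fold u0 in HA, HB. fold b in HB. fold f in HB.
    rewrite HA, HB.
    rewrite trig_a, trig_b by auto. fold s c.
    unfold vadd, vscale, b, vsub, vscale. cfield.
  - assert (Hz : vnorm d z <= eps).
    { pose proof (dual d eps s U Pt P W HU HPt HP HW Heps Hap psi Hpsi) as Hd.
      rewrite Hunit in Hd. fold a in Hd. fold z in Hd. lra. }
    assert (Hf : vnorm d f <= eps / c).
    { destruct (HW psi Hpsi) as [Ha _]. fold a in Ha.
      unfold f, b. rewrite mapply_vscale, mapply_vsub, mapply_vscale.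
      rewrite vnorm_vscale, Rabs_pos_eq by (apply Rlt_le, Rinv_0_lt_compat; auto).
      rewrite (vnorm_ext d _ (vsub (mapply d Pt u0) (vscale (RtoC s) a))).
      2:{ intros. unfold vsub, vscale. rewrite (in_img_fix d Pt a i); auto. }
      rewrite vnorm_sub_sym. specialize (Hap psi Hpsi Hunit). fold s a u0 in Hap.
      unfold Rdiv. rewrite Rmult_comm. apply Rmult_le_compat_r; auto.
      apply Rlt_le, Rinv_0_lt_compat; auto. }
    eapply Rle_trans. apply vnorm_triangle.
    rewrite !vnorm_vscale, vnorm_unitary, vnorm_Hop by auto.
    assert (HK : Rabs (2 * sin al + 2 * s * cos al / c) <= 2 / c).
    { replace (2 * sin al + 2 * s * cos al / c) with (2 * sin (al + th) / c).
      2:{ rewrite sin_plus. fold s c. field; auto. }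
      unfold Rdiv. rewrite !Rabs_mult, (Rabs_pos_eq 2) by lra.
      rewrite (Rabs_pos_eq (/ c)) by (apply Rlt_le, Rinv_0_lt_compat; auto).
      pose proof (SIN_bound (al + th)).
      assert (Rabs (sin (al + th)) <= 1) by (apply Rabs_le; lra).
      assert (0 < / c) by (apply Rinv_0_lt_compat; auto). nra. }
    assert (HK2 : Rabs (-2 * cos al) <= 2).
    { rewrite Rabs_mult. replace (Rabs (-2)) with 2 by (rewrite Rabs_left; lra).
      pose proof (COS_bound al). assert (Rabs (cos al) <= 1) by (apply Rabs_le; lra). lra. }
    pose proof (vnorm_nonneg d z). pose proof (vnorm_nonneg d f).
    pose proof (Rabs_pos (2 * sin al + 2 * s * cos al / c)).
    pose proof (Rabs_pos (-2 * cos al)).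
    assert (Rabs (2 * sin al + 2 * s * cos al / c) * vnorm d z <= 2 / c * eps).
    { apply Rle_trans with (Rabs (2 * sin al + 2 * s * cos al / c) * eps). nra.
      apply Rmult_le_compat_r; auto. }
    assert (Rabs (-2 * cos al) * vnorm d f <= 2 * (eps / c)).
    { apply Rle_trans with (Rabs (-2 * cos al) * (eps / c)). nra.
      apply Rmult_le_compat_r; auto. unfold Rdiv. apply Rmult_le_pos; auto. apply Rlt_le, Rinv_0_lt_compat; auto. }
    replace (4 * eps / c) with (2 / c * eps + 2 * (eps / c)) by (field; auto). lra.
Qed.

Definition fstep d U P Pt (x : Vec) : Vec := vscale (RtoC (-1)) (Gop d U P Pt x).

Lemma iter_bound d eps th U Pt P W psi (HU : unitary d U) (HPt : projector d Pt) (HP : projector d P)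
  (HW : isometry_between d P Pt W) (Heps : 0 <= eps)
  (Hap : forall psi, in_img d P psi -> vnorm d psi = 1 ->
     vnorm d (vsub (vscale (RtoC (sin th)) (mapply d W psi)) (mapply d Pt (mapply d U psi))) <= eps)
  (Hpsi : in_img d P psi) (Hunit : vnorm d psi = 1) (Hc : 0 < cos th) :
  let s := sin th in let c := cos th in
  let a := mapply d W psi in
  let u0 := mapply d U psi in
  let b := vscale (RtoC (/c)) (vsub u0 (vscale (RtoC s) a)) in
  forall j, vnorm d (vsub (Nat.iter j (fstep d U P Pt) u0)
     (vadd (vscale (RtoC (sin ((2 * INR j + 1) * th))) a) (vscale (RtoC (cos ((2 * INR j + 1) * th))) b)))
     <= INR j * (4 * eps / c).
Proof.
  intros s c a u0 b j.
  assert (Hc0 : c <> 0) by (unfold c; lra).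
  induction j.
  - simpl Nat.iter. replace ((2 * INR 0 + 1) * th) with th by (simpl; ring). fold s c.
    rewrite (vnorm_ext d _ (vscale (RtoC 0) (fun _ => C0))).
    rewrite vnorm_zero. simpl. lra.
    intros. unfold vsub, vadd, vscale, b. cfield.
  - destruct (step d eps th U Pt P W psi HU HPt HP HW Heps Hap Hpsi Hunit Hc ((2 * INR j + 1) * th)) as [E [HE1 HE2]].
    fold s c a u0 b in HE1, HE2.
    replace ((2 * INR j + 1) * th + 2 * th) with ((2 * INR (S j) + 1) * th) in HE1 by (rewrite S_INR; ring).
    set (w := vadd (vscale (RtoC (sin ((2 * INR j + 1) * th))) a) (vscale (RtoC (cos ((2 * INR j + 1) * th))) b)) in *.
    set (w' := vadd (vscale (RtoC (sin ((2 * INR (S j) + 1) * th))) a) (vscale (RtoC (cos ((2 * INR (S j) + 1) * th))) b)) in *.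
    set (x := Nat.iter j (fstep d U P Pt) u0) in *.
    change (Nat.iter (S j) (fstep d U P Pt) u0) with (fstep d U P Pt x).
    rewrite (vnorm_ext d _ (vsub (vscale (RtoC (-1)) (Gop d U P Pt (vsub x w))) E)).
    2:{ intros i Hi. rewrite Gop_sub. unfold fstep, vsub, vscale. rewrite HE1 by auto.
        unfold vadd, vscale. cring. }
    eapply Rle_trans. apply vnorm_sub_triangle.
    rewrite vnorm_neg, vnorm_Gop by auto. rewrite S_INR. lra.
Qed.

Definition Phi0 (j : nat) : R := if Nat.eqb j 1 then 0 else PI / 2.

Lemma expi0 d X v i : (i < d)%nat -> mapply d (expi_refl 0 X) v i = v i.
Proof. intros Hi. unfold expi_refl. rewrite mapply_madd, !mapply_mscale.
  unfold vadd, vscale. rewrite mapply_Id by auto. rewrite cos_0, sin_0. cring. Qed.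

Lemma expi_half d X v i : (i < d)%nat ->
  mapply d (expi_refl (PI/2) X) v i = Cmul (Cmul Ci (RtoC (-1))) (refl_v d X v i).
Proof. intros Hi. unfold expi_refl, refl. rewrite mapply_madd, !mapply_mscale, mapply_madd, !mapply_mscale.
  unfold vadd, vscale, refl_v, vsub. rewrite !mapply_Id by auto. rewrite cos_PI2, sin_PI2. cring. Qed.

Lemma block_step d U P Pt j y i : (1 <= j)%nat -> (i < d)%nat ->
  mapply d U (mapply d (qsp_block d U P Pt Phi0 j) y) i = fstep d U P Pt (mapply d U y) i.
Proof. intros Hj Hi. unfold qsp_block. rewrite !mapply_mmul.
  replace (Phi0 (2 * j)) with (PI/2) by (unfold Phi0; destruct (Nat.eqb_spec (2*j) 1); [lia|auto]).
  replace (Phi0 (2 * j + 1)) with (PI/2) by (unfold Phi0; destruct (Nat.eqb_spec (2*j+1) 1); [lia|auto]).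
  set (m := Cmul Ci (RtoC (-1))).
  rewrite (mapply_ext d (adj U) _ (vscale m (refl_v d Pt (mapply d U y)))).
  2:{ intros. unfold vscale. apply expi_half; auto. }
  rewrite mapply_vscale.
  rewrite (mapply_ext d U _ (vscale m (refl_v d P (vscale m (mapply d (adj U) (refl_v d Pt (mapply d U y))))))).
  2:{ intros. unfold vscale at 1. apply expi_half; auto. }
  rewrite refl_v_scale, !mapply_vscale. unfold fstep, Gop, Hop, vscale. unfold m. cring.
Qed.

Lemma fstep_ext d U P Pt u v : (forall k, (k < d)%nat -> u k = v k) -> fstep d U P Pt u = fstep d U P Pt v.
Proof. intros. unfold fstep. rewrite (Gop_ext d U P Pt u v); auto. Qed.

Lemma iter_ext d U P Pt m u v : (forall k, (k < d)%nat -> u k = v k) ->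
  forall i, (i < d)%nat -> Nat.iter m (fstep d U P Pt) u i = Nat.iter m (fstep d U P Pt) v i.
Proof. intros H. induction m; intros i Hi. simpl; auto.
  change (fstep d U P Pt (Nat.iter m (fstep d U P Pt) u) i = fstep d U P Pt (Nat.iter m (fstep d U P Pt) v) i).
  rewrite (fstep_ext d U P Pt _ _ IHm). auto. Qed.

Lemma blocks_iter d U P Pt k : forall y i, (i < d)%nat ->
  mapply d U (mapply d (qsp_blocks d U P Pt Phi0 k) y) i = Nat.iter k (fstep d U P Pt) (mapply d U y) i.
Proof. induction k; intros y i Hi.
  - simpl qsp_blocks. simpl Nat.iter. rewrite (mapply_ext d U (mapply d Id y) y); auto. intros; apply mapply_Id; auto.
  - simpl qsp_blocks. rewrite mapply_mmul, IHk by auto. rewrite Nat.iter_succ_r.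
    apply iter_ext; auto. intros. apply block_step; auto. lia.
Qed.

Lemma UPhi_iter d U P Pt n psi i : (i < d)%nat ->
  mapply d (UPhi d U P Pt Phi0 n) psi i = Nat.iter ((n-1)/2) (fstep d U P Pt) (mapply d U psi) i.
Proof. intros Hi. unfold UPhi. rewrite !mapply_mmul.
  replace (Phi0 1) with 0 by reflexivity. rewrite expi0 by auto. apply blocks_iter; auto. Qed.

Lemma cos_lb th : - PI / 2 <= th -> th <= PI / 2 -> 1 - th * th / 2 <= cos th.
Proof. intros. destruct (cos_bound th 0 H H0) as [H1 _].
  replace (cos_approx th (2 * 0 + 1)) with (1 - th * th / 2) in H1. auto.
  unfold cos_approx, cos_term. simpl. field. Qed.

Theorem mainTheorem13 (d n : nat) (eps : R) (U Pt P W : Mat)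
  (Hodd : Nat.Odd n) (Hn : (1 <= n)%nat) (Heps : 0 <= eps)
  (HU : unitary d U) (HPt : projector d Pt) (HP : projector d P)
  (HW : isometry_between d P Pt W)
  (Happrox : forall psi : Vec, in_img d P psi -> vnorm d psi = 1 ->
     vnorm d (vsub (vscale (RtoC (sin (PI / (2 * INR n)))) (mapply d W psi))
                   (mapply d Pt (mapply d U psi))) <= eps) :
  exists (Phi : nat -> R) (s : R), (s = 1 \/ s = -1) /\
    forall psi : Vec, in_img d P psi -> vnorm d psi = 1 ->
      vnorm d (vsub (mapply d W psi)
                    (mapply d Pt (mapply d (mscale (RtoC s) (UPhi d U P Pt Phi n)) psi)))
        <= 2 * INR n * eps.
Proof.
  destruct Hodd as [k Hk].
  exists Phi0, 1. split; [left; auto|]. intros psi Hpsi Hunit.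
  set (th := PI / (2 * INR n)) in *.
  rewrite mapply_mscale, vscale1.
  assert (Hkk : ((n - 1) / 2 = k)%nat).
  { rewrite Hk. replace (2 * k + 1 - 1)%nat with (k * 2)%nat by lia. apply Nat.div_mul. lia. }
  rewrite (mapply_ext d Pt _ (Nat.iter k (fstep d U P Pt) (mapply d U psi))).
  2:{ intros. rewrite UPhi_iter by auto. rewrite Hkk. auto. }
  destruct (HW psi Hpsi) as [Ha Hna].
  assert (HnR : INR n = 2 * INR k + 1) by (rewrite Hk, plus_INR, mult_INR; simpl; ring).
  destruct k as [|k'].
  - simpl Nat.iter. specialize (Happrox psi Hpsi Hunit).
    replace (sin th) with 1 in Happrox.
    2:{ unfold th. rewrite HnR. simpl. replace (2 * (2 * 0 + 1)) with 2 by ring. rewrite sin_PI2. auto. }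
    rewrite vscale1 in Happrox. rewrite HnR. simpl INR. lra.
  - set (k := S k') in *.
    assert (HK : 1 <= INR k) by (unfold k; rewrite S_INR; pose proof (pos_INR k'); lra).
    pose proof PI_RGT_0 as HPI. pose proof PI_4 as HPI4.
    assert (Hth : th * (2 * INR n) = PI) by (unfold th; field; lra).
    assert (Hth0 : 0 < th) by (unfold th; apply Rdiv_lt_0_compat; lra).
    assert (Hth1 : th <= PI / 6) by (unfold th; apply Rmult_le_compat_l; [lra|]; apply Rinv_le_contravar; lra).
    assert (Hc : 0 < cos th) by (apply cos_gt_0; lra).
    pose proof (cos_lb th ltac:(lra) ltac:(lra)) as Hclb.
    pose proof (iter_bound d eps th U Pt P W psi HU HPt HP HW Heps Happrox Hpsi Hunit Hc k) as Hb.
    cbv zeta in Hb.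
    replace ((2 * INR k + 1) * th) with (PI / 2) in Hb by (rewrite <- HnR; field_simplify; lra).
    rewrite sin_PI2, cos_PI2 in Hb.
    rewrite (vnorm_ext d _ (mapply d Pt (vsub (mapply d W psi) (Nat.iter k (fstep d U P Pt) (mapply d U psi))))).
    2:{ intros. rewrite mapply_vsub. unfold vsub. rewrite (in_img_fix d Pt (mapply d W psi)); auto. }
    eapply Rle_trans. apply vnorm_proj_le; auto.
    rewrite vnorm_sub_sym.
    rewrite (vnorm_ext d _ (vsub (Nat.iter k (fstep d U P Pt) (mapply d U psi))
       (vadd (vscale (RtoC 1) (mapply d W psi)) (vscale (RtoC 0) (vscale (RtoC (/ cos th))
          (vsub (mapply d U psi) (vscale (RtoC (sin th)) (mapply d W psi)))))))).
    2:{ intros. unfold vsub, vadd, vscale. cring. }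
    eapply Rle_trans. apply Hb.
    assert (H2k : 2 * INR k <= (2 * INR k + 1) * cos th).
    { assert ((2 * INR k + 1) * (th * th) <= 2).
      { assert (th * (2 * (2 * INR k + 1)) = PI) by (rewrite <- HnR; lra).
        assert ((2 * INR k + 1) * (th * th) * (4 * (2 * INR k + 1)) = PI * PI) by nra.
        nra. }
      nra. }
    rewrite HnR. unfold Rdiv.
    assert (INR k * (4 * eps * / cos th) * cos th = 4 * INR k * eps) by (field; lra).
    assert (0 < / cos th) by (apply Rinv_0_lt_compat; lra).
    apply Rmult_le_reg_r with (cos th); auto. nra.
Qed.
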